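(* The variety $\mathsf{V}(S_{(4,430)})$ is the ai-semiring variety defined by the identities $xy\approx yx$, $x^4\approx x^3$, $x^3\approx x^2+x$, $x+xy\approx x+x^2y$, $x^2+y^2\approx x^2+y^2+xy$, $x_1x_2x_3\approx x_1x_2x_3+x_1x_2x_3x_4$.
   Context: An ai-semiring is an algebra $(S,+,\cdot)$ with $(S,+)$ a semilattice, $(S,\cdot)$ a semigroup, and both distributive laws. $\mathsf{V}(S)$ is the variety generated by $S$; ''the ai-semiring variety defined by identities $\Sigma$'' is the class of all ai-semirings satisfying $\Sigma$. $S_{(4,430)}$ has carrier $\{1,2,3,4\}$; addition: $x+x=x$, $2+x=x$, $1+x=1$ for all $x$, $3+4=1$; multiplication (row $a$, column $b$ gives $a\cdot b$): row $1$: $1,2,1,1$; row $2$: $2,2,2,2$; row $3$: $1,2,1,1$; row $4$: $1,2,1,3$. *)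

(* Defs.v *)
Record aisemiring := AISemiring {
  car :> Type;
  sadd : car -> car -> car;
  smul : car -> car -> car;
  sadd_assoc : forall x y z, sadd x (sadd y z) = sadd (sadd x y) z;
  sadd_comm : forall x y, sadd x y = sadd y x;
  sadd_idem : forall x, sadd x x = x;
  smul_assoc : forall x y z, smul x (smul y z) = smul (smul x y) z;
  smul_distl : forall x y z, smul x (sadd y z) = sadd (smul x y) (smul x z);
  smul_distr : forall x y z, smul (sadd x y) z = sadd (smul x z) (smul y z)
}.

Inductive term : Type :=
| Var : nat -> term
| Add : term -> term -> term
| Mul : term -> term -> term.

Fixpoint eval (A : aisemiring) (v : nat -> A) (t : term) : A :=
  match t with
  | Var n => v n
  | Add s u => sadd A (eval A v s) (eval A v u)
  | Mul s u => smul A (eval A v s) (eval A v u)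
  end.

Definition holds (A : aisemiring) (u v : term) : Prop :=
  forall val : nat -> A, eval A val u = eval A val v.

(** Membership in the variety V(S) generated by S: by Birkhoff's HSP theorem,
    V(S) is exactly the class of algebras satisfying every identity of S. *)
Definition in_variety_gen (S A : aisemiring) : Prop :=
  forall u v : term, holds S u v -> holds A u v.

Inductive E4 : Type := e1 | e2 | e3 | e4.

Definition add4 (a b : E4) : E4 :=
  match a, b with
  | e1, _ => e1
  | _, e1 => e1
  | e2, y => y
  | x, e2 => x
  | e3, e3 => e3
  | e4, e4 => e4
  | e3, e4 => e1
  | e4, e3 => e1
  end.

Definition mul4 (a b : E4) : E4 :=
  match a, b with
  | e2, _ => e2
  | _, e2 => e2
  | e4, e4 => e3
  | _, _ => e1
  end.

Lemma add4_assoc x y z : add4 x (add4 y z) = add4 (add4 x y) z.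
Proof. destruct x, y, z; reflexivity. Qed.
Lemma add4_comm x y : add4 x y = add4 y x.
Proof. destruct x, y; reflexivity. Qed.
Lemma add4_idem x : add4 x x = x.
Proof. destruct x; reflexivity. Qed.
Lemma mul4_assoc x y z : mul4 x (mul4 y z) = mul4 (mul4 x y) z.
Proof. destruct x, y, z; reflexivity. Qed.
Lemma mul4_distl x y z : mul4 x (add4 y z) = add4 (mul4 x y) (mul4 x z).
Proof. destruct x, y, z; reflexivity. Qed.
Lemma mul4_distr x y z : mul4 (add4 x y) z = add4 (mul4 x z) (mul4 y z).
Proof. destruct x, y, z; reflexivity. Qed.

Definition S4_430 : aisemiring :=
  AISemiring E4 add4 mul4 add4_assoc add4_comm add4_idem
             mul4_assoc mul4_distl mul4_distr.

(** The identities of the statement; x = Var 0, y = Var 1,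
    x1..x4 = Var 0..Var 3; products are left-bracketed (irrelevant by
    associativity). *)
Definition x := Var 0.
Definition y := Var 1.

Definition Sigma (A : aisemiring) : Prop :=
  holds A (Mul x y) (Mul y x) /\
  holds A (Mul (Mul (Mul x x) x) x) (Mul (Mul x x) x) /\
  holds A (Mul (Mul x x) x) (Add (Mul x x) x) /\
  holds A (Add x (Mul x y)) (Add x (Mul (Mul x x) y)) /\
  holds A (Add (Mul x x) (Mul y y)) (Add (Add (Mul x x) (Mul y y)) (Mul x y)) /\
  holds A (Mul (Mul (Var 0) (Var 1)) (Var 2))
          (Add (Mul (Mul (Var 0) (Var 1)) (Var 2))
               (Mul (Mul (Mul (Var 0) (Var 1)) (Var 2)) (Var 3))).

(* Main.v *)
Require Import Defs.
From Stdlib Require Import List Lia Classical Arith.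
Import ListNotations.

Local Infix "⊕" := (sadd _) (at level 50, left associativity).
Local Infix "⊗" := (smul _) (at level 40, left associativity).

Definition le (A : aisemiring) (a b : A) : Prop := a ⊕ b = b.



Lemma le_refl (A : aisemiring) (a : A) : le A a a.
Proof. apply sadd_idem. Qed.
Lemma le_trans (A : aisemiring) (a b c : A) : le A a b -> le A b c -> le A a c.
Proof. unfold le; intros H1 H2. rewrite <- H2 at 1. rewrite sadd_assoc, H1. exact H2. Qed.
Lemma le_antisym (A : aisemiring) (a b : A) : le A a b -> le A b a -> a = b.
Proof. unfold le; intros H1 H2. rewrite <- H2 at 1. rewrite sadd_comm. exact H1. Qed.
Lemma le_addl (A : aisemiring) (a b : A) : le A a (a ⊕ b).
Proof. unfold le. rewrite sadd_assoc, sadd_idem. reflexivity. Qed.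
Lemma le_addr (A : aisemiring) (a b : A) : le A b (a ⊕ b).
Proof. unfold le. rewrite (sadd_comm _ a b), sadd_assoc, sadd_idem. reflexivity. Qed.
Lemma le_join (A : aisemiring) (a b c : A) : le A a c -> le A b c -> le A (a ⊕ b) c.
Proof. unfold le; intros H1 H2. rewrite <- sadd_assoc, H2, H1. reflexivity. Qed.
Lemma le_mulr (A : aisemiring) (a b c : A) : le A a b -> le A (a ⊗ c) (b ⊗ c).
Proof. unfold le; intros H. rewrite <- smul_distr, H. reflexivity. Qed.
Lemma le_mull (A : aisemiring) (a b c : A) : le A a b -> le A (c ⊗ a) (c ⊗ b).
Proof. unfold le; intros H. rewrite <- smul_distl, H. reflexivity. Qed.

Fixpoint evm (A : aisemiring) (v : nat -> A) (l : list nat) : A :=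
  match l with
  | [] => v 0
  | n :: l' => match l' with [] => v n | _ => v n ⊗ evm A v l' end
  end.

Fixpoint evp (A : aisemiring) (v : nat -> A) (U : list (list nat)) : A :=
  match U with
  | [] => v 0
  | m :: U' => match U' with [] => evm A v m | _ => evm A v m ⊕ evp A v U' end
  end.

Fixpoint mono (t : term) : list (list nat) :=
  match t with
  | Var n => [[n]]
  | Defs.Add s u => mono s ++ mono u
  | Mul s u => flat_map (fun a => map (fun b => a ++ b) (mono u)) (mono s)
  end.

Lemma evm_cons (A : aisemiring) v n l : l <> [] -> evm A v (n :: l) = v n ⊗ evm A v l.
Proof. destruct l; [congruence | reflexivity]. Qed.

Lemma evp_cons (A : aisemiring) v m U : U <> [] -> evp A v (m :: U) = evm A v m ⊕ evp A v U.
Proof. destruct U; [congruence | reflexivity]. Qed.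

Lemma evm_app (A : aisemiring) v l1 l2 : l1 <> [] -> l2 <> [] ->
  evm A v (l1 ++ l2) = evm A v l1 ⊗ evm A v l2.
Proof.
  induction l1 as [|a l1 IH]; intros H1 H2; [congruence|].
  destruct l1 as [|b l1'].
  - simpl. apply evm_cons; auto.
  - change ((a :: b :: l1') ++ l2) with (a :: ((b :: l1') ++ l2)).
    rewrite evm_cons by (simpl; congruence).
    rewrite IH by (auto; congruence).
    rewrite (evm_cons A v a (b :: l1')) by congruence.
    apply smul_assoc.
Qed.

Lemma evp_app (A : aisemiring) v U1 U2 : U1 <> [] -> U2 <> [] ->
  evp A v (U1 ++ U2) = evp A v U1 ⊕ evp A v U2.
Proof.
  induction U1 as [|a U1 IH]; intros H1 H2; [congruence|].
  destruct U1 as [|b U1'].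
  - simpl. apply evp_cons; auto.
  - change ((a :: b :: U1') ++ U2) with (a :: ((b :: U1') ++ U2)).
    rewrite evp_cons by (simpl; congruence).
    rewrite IH by (auto; congruence).
    rewrite (evp_cons A v a (b :: U1')) by congruence.
    apply sadd_assoc.
Qed.

Lemma mono_ne t : mono t <> [].
Proof.
  induction t as [n|s IHs u IHu|s IHs u IHu]; simpl.
  - congruence.
  - destruct (mono s); simpl; congruence.
  - destruct (mono s) as [|a U]; [congruence|]. destruct (mono u); simpl; congruence.
Qed.

Lemma mono_mne t : forall m, In m (mono t) -> m <> [].
Proof.
  induction t as [n|s IHs u IHu|s IHs u IHu]; simpl; intros m Hm.
  - destruct Hm as [<-|[]]; congruence.
  - apply in_app_or in Hm as [H|H]; auto.
  - apply in_flat_map in Hm as [a [Ha Hm]]. apply in_map_iff in Hm as [b [<- Hb]].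
    destruct a; [exfalso; exact (IHs _ Ha eq_refl)|]. simpl; congruence.
Qed.

Lemma evp_map_app (A : aisemiring) v a U : a <> [] -> U <> [] -> (forall b, In b U -> b <> []) ->
  evp A v (map (fun b => a ++ b) U) = evm A v a ⊗ evp A v U.
Proof.
  intros Ha. induction U as [|b U IH]; intros HU Hb; [congruence|].
  destruct U as [|c U'].
  - simpl. apply evm_app; auto. apply Hb; simpl; auto.
  - change (map (fun b => a ++ b) (b :: c :: U')) with ((a ++ b) :: map (fun b => a ++ b) (c :: U')).
    rewrite evp_cons by (simpl; congruence).
    rewrite IH by (simpl in *; auto; congruence).
    rewrite evm_app by (auto; apply Hb; simpl; auto).
    rewrite (evp_cons A v b (c :: U')) by congruence.
    symmetry; apply smul_distl.
Qed.

Lemma evp_flat (A : aisemiring) v U1 U2 : U1 <> [] -> U2 <> [] -> (forall a, In a U1 -> a <> []) ->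
  (forall b, In b U2 -> b <> []) ->
  evp A v (flat_map (fun a => map (fun b => a ++ b) U2) U1) = evp A v U1 ⊗ evp A v U2.
Proof.
  intros H1 H2 Ha Hb. induction U1 as [|a U1 IH]; [congruence|].
  simpl flat_map. destruct U1 as [|c U1'].
  - simpl flat_map. rewrite app_nil_r. simpl evp at 2. apply evp_map_app; auto. apply Ha; simpl; auto.
  - rewrite evp_app.
    + rewrite evp_map_app; auto; [|apply Ha; simpl; auto].
      rewrite IH; [|congruence| intros; apply Ha; simpl; auto].
      rewrite (evp_cons A v a (c :: U1')) by congruence.
      symmetry; apply smul_distr.
    + destruct U2; [congruence|]. simpl; congruence.
    + destruct U2; [congruence|]. simpl; congruence.
Qed.

Lemma eval_mono (A : aisemiring) v t : eval A v t = evp A v (mono t).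
Proof.
  induction t as [n|s IHs u IHu|s IHs u IHu]; simpl.
  - reflexivity.
  - rewrite evp_app by apply mono_ne. congruence.
  - rewrite evp_flat by (apply mono_ne || apply mono_mne). congruence.
Qed.

Lemma evp_ge (A : aisemiring) v U q : In q U -> le A (evm A v q) (evp A v U).
Proof.
  induction U as [|a U IH]; intros Hq; [destruct Hq|].
  destruct U as [|b U'].
  - destruct Hq as [<-|[]]. apply le_refl.
  - rewrite evp_cons by congruence. destruct Hq as [<-|Hq].
    + apply le_addl.
    + eapply le_trans; [apply IH; exact Hq| apply le_addr].
Qed.

Lemma evp_le (A : aisemiring) v U X : U <> [] -> (forall q, In q U -> le A (evm A v q) X) -> le A (evp A v U) X.
Proof.
  induction U as [|a U IH]; intros HU H; [congruence|].
  destruct U as [|b U'].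
  - apply H; simpl; auto.
  - rewrite evp_cons by congruence. apply le_join.
    + apply H; simpl; auto.
    + apply IH; [congruence|]. intros; apply H; simpl; auto.
Qed.

Lemma mono_bound (A : aisemiring) v t m : In m (mono t) -> le A (evm A v m) (eval A v t).
Proof. intros. rewrite eval_mono. apply evp_ge; auto. Qed.

Definition val2 (A : aisemiring) (a b : A) : nat -> A := fun n => match n with 0 => a | _ => b end.
Definition val4 (A : aisemiring) (a b c d : A) : nat -> A :=
  fun n => match n with 0 => a | 1 => b | 2 => c | _ => d end.

Lemma S_comm (A : aisemiring) : Sigma A -> forall a b : A, a ⊗ b = b ⊗ a.
Proof. intros HS a b. destruct HS as [H _]. exact (H (val2 A a b)). Qed.
Lemma S_cube (A : aisemiring) : Sigma A -> forall a : A, a ⊗ a ⊗ a = a ⊗ a ⊕ a.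
Proof. intros HS a. destruct HS as [_ [_ [H _]]]. exact (H (val2 A a a)). Qed.
Lemma S_c4 (A : aisemiring) : Sigma A -> forall a b : A, a ⊕ a ⊗ b = a ⊕ a ⊗ a ⊗ b.
Proof. intros HS a b. destruct HS as [_ [_ [_ [H _]]]]. exact (H (val2 A a b)). Qed.
Lemma S_d5 (A : aisemiring) : Sigma A -> forall a b : A, le A (a ⊗ b) (a ⊗ a ⊕ b ⊗ b).
Proof. intros HS a b. destruct HS as [_ [_ [_ [_ [H _]]]]].
  unfold le. rewrite sadd_comm. symmetry. exact (H (val2 A a b)). Qed.
Lemma S_e6 (A : aisemiring) : Sigma A -> forall a b c d : A, le A (a ⊗ b ⊗ c ⊗ d) (a ⊗ b ⊗ c).
Proof. intros HS a b c d. destruct HS as [_ [_ [_ [_ [_ H]]]]].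
  unfold le. rewrite sadd_comm. symmetry. exact (H (val4 A a b c d)). Qed.

Definition D3 (A : aisemiring) (e : A) := exists a b c, e = a ⊗ b ⊗ c.

Lemma L_e6 (A : aisemiring) : Sigma A -> forall e t : A, D3 A e -> le A (e ⊗ t) e.
Proof. intros HS e t [a [b [c ->]]]. apply S_e6; auto. Qed.

Lemma L_D3mul (A : aisemiring) (e t : A) : D3 A e -> D3 A (e ⊗ t).
Proof. intros [a [b [c ->]]]. exists a, b, (c ⊗ t). symmetry; apply smul_assoc. Qed.

Lemma L1 (A : aisemiring) : Sigma A -> forall a : A, le A a (a ⊗ a ⊗ a).
Proof. intros HS a. rewrite S_cube by auto. apply le_addr. Qed.

Lemma Key (A : aisemiring) : Sigma A -> forall z s t : A, le A (z ⊗ (s ⊗ t)) (z ⊗ (s ⊗ t) ⊗ z).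
Proof.
  intros HS z s t.
  eapply le_trans. { apply le_mulr. apply (L1 A HS z). }
  rewrite <- (smul_assoc _ (z ⊗ z) z (s ⊗ t)).
  rewrite (S_comm A HS (z ⊗ z)).
  rewrite smul_assoc.
  apply L_e6; auto. exists (z ⊗ s), t, z. rewrite smul_assoc. reflexivity.
Qed.

Lemma evm_split (A : aisemiring) v l1 z l2 : Sigma A -> l1 ++ l2 <> [] ->
  evm A v (l1 ++ z :: l2) = v z ⊗ evm A v (l1 ++ l2).
Proof.
  intros HS. induction l1 as [|a l1 IH]; intros H.
  - simpl. apply evm_cons. simpl in H; auto.
  - change ((a :: l1) ++ z :: l2) with (a :: (l1 ++ z :: l2)).
    rewrite evm_cons by (destruct l1; simpl; congruence).
    destruct (l1 ++ l2) as [|c r] eqn:E.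
    + apply app_eq_nil in E as [-> ->]. simpl. apply S_comm; auto.
    + rewrite IH by congruence. change ((a :: l1) ++ l2) with (a :: (l1 ++ l2)).
      rewrite E. rewrite (evm_cons A v a (c :: r)) by congruence.
      rewrite !smul_assoc. rewrite (S_comm A HS (v a)). reflexivity.
Qed.

Lemma len2 (A : aisemiring) v l : 2 <= length l -> exists s t, evm A v l = s ⊗ t.
Proof.
  destruct l as [|a [|b l]]; simpl length; intros H; try lia.
  exists (v a), (evm A v (b :: l)). apply evm_cons; congruence.
Qed.

Lemma D3_evm (A : aisemiring) v l : 3 <= length l -> D3 A (evm A v l).
Proof.
  destruct l as [|a [|b [|c l]]]; simpl length; intros H; try lia.
  exists (v a), (v b), (evm A v (c :: l)).
  rewrite (evm_cons A v a) by congruence. rewrite (evm_cons A v b) by congruence.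
  apply smul_assoc.
Qed.

Lemma step (A : aisemiring) v m z : Sigma A -> 3 <= length m -> In z m ->
  le A (evm A v m) (evm A v m ⊗ v z).
Proof.
  intros HS Hl Hz. apply in_split in Hz as [l1 [l2 ->]].
  rewrite evm_split by (auto; rewrite length_app in *; simpl in *; destruct l1, l2; simpl in *; try lia; congruence).
  destruct (len2 A v (l1 ++ l2)) as [s [t E]].
  { rewrite length_app in *; simpl in *; lia. }
  rewrite E. apply Key; auto.
Qed.

Lemma stepA (A : aisemiring) v p : Sigma A -> forall m, incl p m -> 3 <= length m ->
  le A (evm A v m) (evm A v (m ++ p)).
Proof.
  intros HS. induction p as [|z p IH]; intros m Hi Hl.
  - rewrite app_nil_r. apply le_refl.
  - replace (m ++ z :: p) with ((m ++ [z]) ++ p) by (rewrite <- app_assoc; reflexivity).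
    eapply le_trans; [|apply IH].
    + rewrite evm_app by (destruct m; simpl in *; try lia; congruence).
      apply step; auto. apply Hi; simpl; auto.
    + intros x Hx. apply in_or_app. left. apply Hi; simpl; auto.
    + rewrite length_app; lia.
Qed.

Lemma content (A : aisemiring) v p m : Sigma A -> 3 <= length p -> 3 <= length m -> incl p m ->
  le A (evm A v m) (evm A v p).
Proof.
  intros HS Hp Hm Hi. eapply le_trans; [apply stepA; eauto|].
  rewrite evm_app by (destruct m, p; simpl in *; try lia; congruence).
  rewrite S_comm by auto. apply L_e6; auto. apply D3_evm; auto.
Qed.

Lemma evm3 (A : aisemiring) v a b c : evm A v [a;b;c] = v a ⊗ v b ⊗ v c.
Proof. simpl. apply smul_assoc. Qed.

Lemma A1 (A : aisemiring) v a p : Sigma A -> 3 <= length p -> incl p [a] ->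
  le A (evm A v [a]) (evm A v p).
Proof.
  intros HS Hp Hi. eapply le_trans; [|apply (content A v p [a;a;a]); auto].
  - simpl evm at 1. rewrite evm3. apply L1; auto.
  - intros x Hx. apply Hi in Hx. destruct Hx as [<-|[]]; simpl; auto.
Qed.

Lemma A2 (A : aisemiring) v a b : Sigma A -> le A (evm A v [a;b]) (evm A v [a;a;a;b]).
Proof.
  intros HS. simpl. rewrite !smul_assoc. rewrite S_cube by auto.
  rewrite smul_distr. apply le_addr.
Qed.

Lemma A2W (A : aisemiring) v a b p : Sigma A -> 3 <= length p -> incl p [a;b] ->
  le A (evm A v [a;b]) (evm A v p).
Proof.
  intros HS Hp Hi. eapply le_trans; [apply A2; auto|]. apply content; simpl; auto.
  intros x Hx. apply Hi in Hx. simpl in *. tauto.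
Qed.

Lemma A2L (A : aisemiring) v a b z : Sigma A -> z = a \/ z = b ->
  le A (evm A v [a;b]) (evm A v [z] ⊕ evm A v [z;z]).
Proof.
  intros HS Hz. eapply le_trans; [apply A2; auto|].
  replace (evm A v [z] ⊕ evm A v [z;z]) with (evm A v [z;z;z]).
  - apply content; simpl; auto. intros x Hx. simpl in *. intuition congruence.
  - rewrite evm3. rewrite S_cube by auto. apply sadd_comm.
Qed.

Lemma A2D (A : aisemiring) v a b : Sigma A ->
  le A (evm A v [a;b]) (evm A v [a;a] ⊕ evm A v [b;b]).
Proof. intros HS. simpl. apply S_d5; auto. Qed.

Lemma A2Q (A : aisemiring) v a b : Sigma A -> evm A v [b;a] = evm A v [a;b].
Proof. intros HS. simpl. apply S_comm; auto. Qed.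

Lemma A3L (A : aisemiring) v m x y : Sigma A -> 3 <= length m -> In x m -> In y m ->
  le A (evm A v m) (evm A v [x] ⊕ evm A v [x;y]).
Proof.
  intros HS Hm Hx Hy. eapply le_trans; [apply (content A v [x;x;y]); auto|].
  - intros z Hz. simpl in Hz. intuition congruence.
  - rewrite evm3. simpl. rewrite S_c4 by auto. apply le_addr.
Qed.

Lemma evp_ge2 (A : aisemiring) v U q1 q2 : In q1 U -> In q2 U ->
  le A (evm A v q1 ⊕ evm A v q2) (evp A v U).
Proof. intros. apply le_join; apply evp_ge; auto. Qed.

Definition S := S4_430.

Lemma evp_pred (phi : nat -> E4) U (P : E4 -> Prop) : U <> [] ->
  (forall x y, P x -> P y -> P (add4 x y)) -> (forall q, In q U -> P (evm S phi q)) ->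
  P (evp S phi U).
Proof.
  intros HU Hc. induction U as [|a U IH]; intros H; [congruence|].
  destruct U as [|b U'].
  - apply H; simpl; auto.
  - rewrite evp_cons by congruence. apply Hc.
    + apply H; simpl; auto.
    + apply IH; [congruence|]. intros; apply H; simpl; auto.
Qed.

Lemma evm_e2 (phi : nat -> E4) q n : In n q -> phi n = e2 -> evm S phi q = e2.
Proof.
  induction q as [|a q IH]; intros Hn Hp; [destruct Hn|].
  destruct q as [|b q'].
  - destruct Hn as [<-|[]]. exact Hp.
  - rewrite evm_cons by congruence. destruct Hn as [<-|Hn].
    + simpl. rewrite Hp. reflexivity.
    + simpl sadd. change (mul4 (phi a) (evm S phi (b :: q')) = e2). rewrite IH by auto.
      destruct (phi a); reflexivity.
Qed.

Lemma classify (phi : nat -> E4) q :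
  evm S phi q = e2 \/ (forall n, In n q -> phi n <> e2).
Proof.
  destruct (classic (exists n, In n q /\ phi n = e2)) as [[n [H1 H2]]|H].
  - left. eapply evm_e2; eauto.
  - right. intros n Hn He. apply H; eauto.
Qed.

Lemma evm_ne2 (phi : nat -> E4) q : q <> [] -> (forall n, In n q -> phi n <> e2) -> evm S phi q <> e2.
Proof.
  induction q as [|a q IH]; intros Hq H; [congruence|].
  destruct q as [|b q'].
  - simpl. apply H; simpl; auto.
  - rewrite evm_cons by congruence.
    assert (H1 : phi a <> e2) by (apply H; simpl; auto).
    assert (H2 : evm S phi (b :: q') <> e2) by (apply IH; [congruence|intros; apply H; simpl; auto]).
    change (mul4 (phi a) (evm S phi (b :: q')) <> e2).
    destruct (phi a), (evm S phi (b :: q')); simpl; congruence.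
Qed.

Lemma evm_long (phi : nat -> E4) a b c r : (forall n, In n (a :: b :: c :: r) -> phi n <> e2) ->
  evm S phi (a :: b :: c :: r) = e1.
Proof.
  intros H.
  assert (H1 : phi a <> e2) by (apply H; simpl; auto).
  assert (H2 : phi b <> e2) by (apply H; simpl; auto).
  assert (H3 : evm S phi (c :: r) <> e2) by (apply evm_ne2; [congruence|intros; apply H; simpl; auto]).
  rewrite evm_cons by congruence. rewrite evm_cons by congruence.
  change (mul4 (phi a) (mul4 (phi b) (evm S phi (c :: r))) = e1).
  destruct (phi a), (phi b), (evm S phi (c :: r)); simpl; congruence.
Qed.

Lemma caseA1 U a : U <> [] -> (forall q, In q U -> q <> []) -> (forall phi, le S (evm S phi [a]) (evp S phi U)) ->
  In [a] U \/ (exists p, In p U /\ 3 <= length p /\ incl p [a]).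
Proof.
  intros HU HUm SH. apply NNPP. intros Hn.
  set (phi := fun n => if Nat.eq_dec n a then e4 else e2).
  assert (Hphi : forall n, phi n <> e2 -> n = a).
  { intros n. unfold phi. destruct (Nat.eq_dec n a); congruence. }
  assert (HP : evp S phi U = e2 \/ evp S phi U = e3).
  { apply evp_pred; auto.
    - intros x y [-> | ->] [-> | ->]; simpl; auto.
    - intros q Hq. destruct (classify phi q) as [E|E]; [auto|].
      destruct q as [|n [|k [|j r]]].
      + exfalso; exact (HUm _ Hq eq_refl).
      + assert (n = a) by (apply Hphi, E; simpl; auto). subst. exfalso; apply Hn; auto.
      + assert (n = a) by (apply Hphi, E; simpl; auto).
        assert (k = a) by (apply Hphi, E; simpl; auto). subst.
        right. simpl. unfold phi. destruct (Nat.eq_dec a a); [reflexivity|congruence].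
      + exfalso. apply Hn. right. exists (n :: k :: j :: r). split; [auto|]. split; [simpl; lia|].
        intros z Hz. left. symmetry. apply Hphi, E, Hz. }
  specialize (SH phi). unfold le in SH. simpl in SH. unfold phi in SH at 1.
  destruct (Nat.eq_dec a a); [|congruence].
  change (car S) with E4 in *.
  destruct HP as [E|E]; rewrite E in SH; simpl in SH; discriminate.
Qed.

Ltac phicomp phi := unfold phi; repeat (destruct Nat.eq_dec); simpl; try congruence.

Lemma caseA2 U a b : U <> [] -> (forall q, In q U -> q <> []) ->
  (forall phi, le S (evm S phi [a;b]) (evp S phi U)) ->
  (exists p, In p U /\ 3 <= length p /\ incl p [a;b]) \/ In [a;b] U \/ In [b;a] U \/
  (exists z, (z = a \/ z = b) /\ In [z] U /\ In [z;z] U) \/ (In [a;a] U /\ In [b;b] U).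
Proof.
  intros HU HUm SH. apply NNPP. intros Hn.
  assert (HW : forall q, In q U -> 3 <= length q -> (forall z, In z q -> z = a \/ z = b) -> False).
  { intros q Hq Hl Hz. apply Hn. left. exists q. split; [auto|split; [auto|]].
    intros z Hz'. destruct (Hz z Hz') as [->| ->]; simpl; auto. }
  destruct (classic (In [a;a] U)) as [Haa|Haa].
  - assert (Hab : a <> b) by (intros <-; apply Hn; right; left; auto).
    set (phi := fun n => if Nat.eq_dec n a then e4 else if Nat.eq_dec n b then e3 else e2).
    assert (Hphi : forall n, phi n <> e2 -> n = a \/ n = b).
    { intros n. unfold phi. destruct (Nat.eq_dec n a); destruct (Nat.eq_dec n b); auto; congruence. }
    assert (HP : evp S phi U = e2 \/ evp S phi U = e3).
    { apply evp_pred; auto.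
      - intros x y [-> | ->] [-> | ->]; simpl; auto.
      - intros q Hq. destruct (classify phi q) as [E|E]; [auto|].
        destruct q as [|n [|k [|j r]]].
        + exfalso; exact (HUm _ Hq eq_refl).
        + destruct (Hphi n) as [->| ->]; [apply E; simpl; auto| |].
          * exfalso; apply Hn; right; right; right; left; exists a; auto.
          * right. simpl. phicomp phi.
        + destruct (Hphi n) as [->| ->]; [apply E; simpl; auto| |];
          (destruct (Hphi k) as [->| ->]; [apply E; simpl; auto| |]).
          * right. simpl. phicomp phi.
          * exfalso; apply Hn; right; left; auto.
          * exfalso; apply Hn; right; right; left; auto.
          * exfalso; apply Hn; right; right; right; right; auto.
        + exfalso. eapply HW; [exact Hq|simpl; lia|]. intros z Hz. apply Hphi, E, Hz. }
    specialize (SH phi). unfold le in SH. change (car S) with E4 in *.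
    assert (Em : evm S phi [a;b] = e1) by (simpl; phicomp phi).
    rewrite Em in SH. destruct HP as [E|E]; rewrite E in SH; simpl in SH; discriminate.
  - destruct (classic (In [b;b] U)) as [Hbb|Hbb].
    + assert (Hab : a <> b) by (intros <-; apply Haa; auto).
      set (phi := fun n => if Nat.eq_dec n b then e4 else if Nat.eq_dec n a then e3 else e2).
      assert (Hphi : forall n, phi n <> e2 -> n = a \/ n = b).
      { intros n. unfold phi. destruct (Nat.eq_dec n a); destruct (Nat.eq_dec n b); auto; congruence. }
      assert (HP : evp S phi U = e2 \/ evp S phi U = e3).
      { apply evp_pred; auto.
        - intros x y [-> | ->] [-> | ->]; simpl; auto.
        - intros q Hq. destruct (classify phi q) as [E|E]; [auto|].
          destruct q as [|n [|k [|j r]]].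
          + exfalso; exact (HUm _ Hq eq_refl).
          + destruct (Hphi n) as [->| ->]; [apply E; simpl; auto| |].
            * right. simpl. phicomp phi.
            * exfalso; apply Hn; right; right; right; left; exists b; auto.
          + destruct (Hphi n) as [->| ->]; [apply E; simpl; auto| |];
            (destruct (Hphi k) as [->| ->]; [apply E; simpl; auto| |]).
            * exfalso; apply Haa; auto.
            * exfalso; apply Hn; right; left; auto.
            * exfalso; apply Hn; right; right; left; auto.
            * right. simpl. phicomp phi.
          + exfalso. eapply HW; [exact Hq|simpl; lia|]. intros z Hz. apply Hphi, E, Hz. }
      specialize (SH phi). unfold le in SH. change (car S) with E4 in *.
      assert (Em : evm S phi [a;b] = e1) by (simpl; phicomp phi).
      rewrite Em in SH. destruct HP as [E|E]; rewrite E in SH; simpl in SH; discriminate.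
    + set (phi := fun n => if Nat.eq_dec n a then e4 else if Nat.eq_dec n b then e4 else e2).
      assert (Hphi : forall n, phi n <> e2 -> n = a \/ n = b).
      { intros n. unfold phi. destruct (Nat.eq_dec n a); destruct (Nat.eq_dec n b); auto; congruence. }
      assert (HP : evp S phi U = e2 \/ evp S phi U = e4).
      { apply evp_pred; auto.
        - intros x y [-> | ->] [-> | ->]; simpl; auto.
        - intros q Hq. destruct (classify phi q) as [E|E]; [auto|].
          destruct q as [|n [|k [|j r]]].
          + exfalso; exact (HUm _ Hq eq_refl).
          + destruct (Hphi n) as [->| ->]; [apply E; simpl; auto| |];
            right; simpl; phicomp phi.
          + destruct (Hphi n) as [->| ->]; [apply E; simpl; auto| |];
            (destruct (Hphi k) as [->| ->]; [apply E; simpl; auto| |]).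
            * exfalso; apply Haa; auto.
            * exfalso; apply Hn; right; left; auto.
            * exfalso; apply Hn; right; right; left; auto.
            * exfalso; apply Hbb; auto.
          + exfalso. eapply HW; [exact Hq|simpl; lia|]. intros z Hz. apply Hphi, E, Hz. }
      specialize (SH phi). unfold le in SH. change (car S) with E4 in *.
      assert (Em : evm S phi [a;b] = e3) by (simpl; phicomp phi).
      rewrite Em in SH. destruct HP as [E|E]; rewrite E in SH; simpl in SH; discriminate.
Qed.

Lemma caseA3 U a b c r : U <> [] -> (forall q, In q U -> q <> []) ->
  (forall phi, le S (evm S phi (a :: b :: c :: r)) (evp S phi U)) ->
  (exists p, In p U /\ 3 <= length p /\ incl p (a :: b :: c :: r)) \/
  (exists x y, In [x] U /\ (In [x;y] U \/ In [y;x] U) /\ In x (a :: b :: c :: r) /\ In y (a :: b :: c :: r)).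
Proof.
  intros HU HUm SH. apply NNPP. intros Hn. set (m := a :: b :: c :: r) in *.
  set (phi := fun n => if in_dec Nat.eq_dec n m then
                (if in_dec (list_eq_dec Nat.eq_dec) [n] U then e3 else e4) else e2).
  assert (Hphi : forall n, phi n <> e2 -> In n m).
  { intros n. unfold phi. destruct (in_dec Nat.eq_dec n m); auto; congruence. }
  assert (HP : evp S phi U = e2 \/ evp S phi U = e3).
  { apply evp_pred; auto.
    - intros x y [-> | ->] [-> | ->]; simpl; auto.
    - intros q Hq. destruct (classify phi q) as [E|E]; [auto|].
      destruct q as [|n [|k [|j r']]].
      + exfalso; exact (HUm _ Hq eq_refl).
      + right. assert (Hm : In n m) by (apply Hphi, E; simpl; auto).
        simpl. unfold phi. destruct (in_dec Nat.eq_dec n m); [|contradiction].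
        destruct (in_dec (list_eq_dec Nat.eq_dec) [n] U); [reflexivity|contradiction].
      + assert (Hm1 : In n m) by (apply Hphi, E; simpl; auto).
        assert (Hm2 : In k m) by (apply Hphi, E; simpl; auto).
        right. simpl. unfold phi.
        destruct (in_dec Nat.eq_dec n m); [|contradiction].
        destruct (in_dec Nat.eq_dec k m); [|contradiction].
        destruct (in_dec (list_eq_dec Nat.eq_dec) [n] U).
        { exfalso; apply Hn; right; exists n, k; auto. }
        destruct (in_dec (list_eq_dec Nat.eq_dec) [k] U).
        { exfalso; apply Hn; right; exists k, n; auto. }
        reflexivity.
      + exfalso. apply Hn. left. exists (n :: k :: j :: r'). split; [auto|split; [simpl; lia|]].
        intros z Hz. apply Hphi, E, Hz. }
  specialize (SH phi). unfold le in SH. change (car S) with E4 in *.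
  assert (Em : evm S phi m = e1).
  { apply evm_long. intros n Hn'. unfold phi.
    destruct (in_dec Nat.eq_dec n m); [|contradiction].
    destruct (in_dec (list_eq_dec Nat.eq_dec) [n] U); congruence. }
  rewrite Em in SH. destruct HP as [E|E]; rewrite E in SH; simpl in SH; discriminate.
Qed.

Lemma mono_case (A : aisemiring) val U m : Sigma A -> U <> [] -> (forall q, In q U -> q <> []) -> m <> [] ->
  (forall phi, le S (evm S phi m) (evp S phi U)) -> le A (evm A val m) (evp A val U).
Proof.
  intros HS HU HUm Hm SH.
  destruct m as [|a [|b [|c r]]]; [congruence| | |].
  - destruct (caseA1 U a HU HUm SH) as [H|[p [Hp [Hl Hi]]]].
    + apply evp_ge; auto.
    + eapply le_trans; [apply (A1 A val a p); auto|apply evp_ge; auto].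
  - destruct (caseA2 U a b HU HUm SH) as [[p [Hp [Hl Hi]]]|[H|[H|[[z [Hz [H1 H2]]]|[H1 H2]]]]].
    + eapply le_trans; [apply (A2W A val a b p); auto|apply evp_ge; auto].
    + apply evp_ge; auto.
    + rewrite <- (A2Q A val a b HS). apply evp_ge; auto.
    + eapply le_trans; [apply (A2L A val a b z); auto|apply evp_ge2; auto].
    + eapply le_trans; [apply (A2D A val a b); auto|apply evp_ge2; auto].
  - destruct (caseA3 U a b c r HU HUm SH) as [[p [Hp [Hl Hi]]]|[x [y [H1 [[H2|H2] [Hx Hy]]]]]].
    + eapply le_trans; [apply (content A val p); simpl; auto; try lia|apply evp_ge; auto].
    + eapply le_trans; [apply (A3L A val _ x y); simpl; auto; try lia|apply evp_ge2; auto].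
    + eapply le_trans; [apply (A3L A val _ x y); simpl; auto; try lia|].
      rewrite <- (A2Q A val x y HS). apply evp_ge2; auto.
Qed.

Lemma bound (A : aisemiring) u v : Sigma A -> holds S4_430 u v ->
  forall val, le A (eval A val v) (eval A val u).
Proof.
  intros HS Huv val. rewrite (eval_mono A val v), (eval_mono A val u).
  apply evp_le; [apply mono_ne|]. intros m Hm.
  apply mono_case; [exact HS | apply mono_ne | intros q Hq; eapply mono_mne; eauto | eapply mono_mne; eauto |].
  intros phi. rewrite <- eval_mono. unfold S. rewrite (Huv phi). apply mono_bound; auto.
Qed.

Lemma Sigma_S : Sigma S4_430.
Proof.
  unfold Sigma, holds, x, y.
  repeat split; intros val; simpl;
  destruct (val 0), (val 1); try reflexivity;
  destruct (val 2), (val 3); reflexivity.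
Qed.

Theorem proposition7p8 :
  forall A : aisemiring, in_variety_gen S4_430 A <-> Sigma A.
Proof.
  intros A. split.
  - intros H. pose proof Sigma_S as HS. unfold Sigma in *.
    destruct HS as [H1 [H2 [H3 [H4 [H5 H6]]]]].
    repeat split; apply H; assumption.
  - intros HS u v Huv val. apply le_antisym.
    + apply bound; [exact HS|]. intros phi. symmetry. apply Huv.
    + apply bound; [exact HS|exact Huv].
Qed.
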